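(* For all matroids $M$ and $N$ on disjoint finite sets, $$\mathrm{T}(M\mathbin{\Box} N)=\begin{cases} M\mathbin{\Box}\mathrm{T}N & \text{if } \rho(N)>0,\\ \mathrm{T}M\mathbin{\Box} N & \text{if } \rho(N)=0,\end{cases}\qquad \mathrm{L}(M\mathbin{\Box} N)=\begin{cases}\mathrm{L}M\mathbin{\Box} N & \text{if } \nu(M)>0,\\ M\mathbin{\Box}\mathrm{L}N & \text{if } \nu(M)=0.\end{cases}$$
   Context: For a matroid $M$ on $S$ write $\rho_M$ for rank, $\rho(M)=\rho_M(S)$, $\nu_M(A)=|A|-\rho_M(A)$, $\nu(M)=\nu_M(S)$, $\lambda_M(A)=\rho(M)-\rho_M(A)$. For matroids $M$ on $S$ and $N$ on $T$ with $S\cap T=\emptyset$, the free product $M\mathbin{\Box} N$ is the matroid on $S\cup T$ whose independent sets are those $A$ with $A\cap S$ independent in $M$ and $\lambda_M(A\cap S)\geq\nu_N(A\cap T)$. The truncation $\mathrm{T}M$ has as independent sets the independent sets $A$ of $M$ with $|A|\leq\max\{0,\rho(M)-1\}$; the Higgs lift $\mathrm{L}M$ has as independent sets the subsets $A$ of the ground set with $\nu_M(A)\leq 1$. *)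

(* Defs.v *)
From mathcomp Require Import all_boot.
Set Implicit Arguments. Unset Strict Implicit. Unset Printing Implicit Defensive.

(* A matroid on a finite ground set E (the whole finType) is given by its
   family of independent sets. *)
Definition is_matroid (E : finType) (I : {set {set E}}) : Prop :=
  [/\ set0 \in I,
      (forall A B : {set E}, B \in I -> A \subset B -> A \in I) &
      (forall A B : {set E}, A \in I -> B \in I -> #|A| < #|B| ->
         exists2 x, x \in B :\: A & x |: A \in I)].

Definition mrank (E : finType) (I : {set {set E}}) (A : {set E}) : nat :=
  \max_(B in I | B \subset A) #|B|.
Definition nullity (E : finType) (I : {set {set E}}) (A : {set E}) : nat :=
  #|A| - mrank I A.
Definition mlambda (E : finType) (I : {set {set E}}) (A : {set E}) : nat :=
  mrank I setT - mrank I A.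

Definition freeprod (S T : finType) (I : {set {set S}}) (J : {set {set T}})
  : {set {set (S + T)}} :=
  [set A : {set (S + T)} | (inl @^-1: A \in I) &&
     (nullity J (inr @^-1: A) <= mlambda I (inl @^-1: A))].

Definition trunc (E : finType) (I : {set {set E}}) : {set {set E}} :=
  [set A in I | #|A| <= (mrank I setT).-1].

Definition hlift (E : finType) (I : {set {set E}}) : {set {set E}} :=
  [set A : {set E} | nullity I A <= 1].

(* Main.v *)
Require Import Defs.
From mathcomp Require Import all_boot zify.


Section Gen.
Variables (E : finType) (I : {set {set E}}).
Hypothesis I0 : set0 \in I.
Implicit Types A B : {set E}.
Hypothesis Ih : forall A B : {set E}, B \in I -> A \subset B -> A \in I.

Lemma rank_ge (I' : {set {set E}}) A B : B \in I' -> B \subset A -> #|B| <= mrank I' A.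
Proof. by move=> BI BA; rewrite /mrank; apply: (bigmax_sup B) => //; rewrite BI. Qed.

Lemma rank_att A : exists2 B, (B \in I) && (B \subset A) & #|B| = mrank I A.
Proof.
have : #|[pred B | (B \in I) && (B \subset A)]| > 0.
  by apply/card_gt0P; exists set0; rewrite inE I0 sub0set.
case/(eq_bigmax_cond (fun B : {set E} => #|B|)) => B HB HE.
by exists B => //; rewrite /mrank HE.
Qed.

Lemma rank_le_card A : mrank I A <= #|A|.
Proof. by apply/bigmax_leqP => B /andP[_ BA]; apply: subset_leq_card. Qed.

Lemma rank_mono A A' : A \subset A' -> mrank I A <= mrank I A'.
Proof.
move=> AA; apply/bigmax_leqP => B /andP[BI BA]; apply: rank_ge => //.
exact: subset_trans AA.
Qed.

Lemma rank_indep A : A \in I -> mrank I A = #|A|.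
Proof. by move=> AI; apply/eqP; rewrite eqn_leq rank_le_card rank_ge. Qed.

Lemma rank_card_indep A : mrank I A = #|A| -> A \in I.
Proof.
move=> H; case: (rank_att A) => B /andP[BI BA] HB.
have : B == A by rewrite eqEcard BA HB H leqnn.
by move/eqP <-.
Qed.

Lemma ex_sub_card (B : {set E}) k : k <= #|B| -> exists2 B' : {set E}, B' \subset B & #|B'| = k.
Proof.
move=> kB; move: {2}#|B| (erefl #|B|) kB => n.
elim: n B => [|n IH] B Bn kn.
  by exists B => //; lia.
case: (ltnP k n.+1) => kn'.
  have : 0 < #|B| by rewrite Bn.
  case/card_gt0P => a aB.
  have : #|B :\ a| = n by move: (cardsD1 a B); rewrite aB Bn; lia.
  move=> Hc; have kn2 : k <= n by lia.
  case: (IH _ Hc); first by rewrite Hc; exact: kn2.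
  move=> B' sB' cB'.
  exists B' => //; apply: subset_trans sB' _; exact: subsetDl.
by exists B => //; lia.
Qed.

Lemma rank_trunc A : mrank (trunc I) A = minn (mrank I A) (mrank I setT).-1.
Proof.
apply/eqP; rewrite eqn_leq; apply/andP; split.
  apply/bigmax_leqP => B /andP[]; rewrite inE => /andP[BI Bc] BA.
  by rewrite leq_min Bc rank_ge.
case: (rank_att A) => B /andP[BI BA] HB.
have [B' sB' cB'] : exists2 B' : {set E}, B' \subset B & #|B'| = minn (mrank I A) (mrank I setT).-1.
  by apply: ex_sub_card; rewrite HB geq_minl.
rewrite -cB'; apply: (@rank_ge _ _ B'); last exact: subset_trans BA.
by rewrite inE (Ih _ _ BI sB') cB' geq_minr.
Qed.

Lemma nullity_le1 A : (nullity I A <= 1) <-> exists2 B, (B \in I) && (B \subset A) & #|A| <= #|B|.+1.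
Proof.
rewrite /nullity; split.
  by case: (rank_att A) => B HB HE H; exists B => //; lia.
by case=> B /andP[BI BA] H; have := rank_ge _ _ _ BI BA; lia.
Qed.

Lemma rank_hlift A : mrank (hlift I) A = minn #|A| (mrank I A).+1.
Proof.
apply/eqP; rewrite eqn_leq; apply/andP; split.
  apply/bigmax_leqP => B /andP[]; rewrite inE => Bn BA.
  rewrite leq_min subset_leq_card //=.
  have := rank_mono _ _ BA; rewrite /nullity in Bn; lia.
case: (rank_att A) => B /andP[BI BA] HB.
case: (boolP (A \subset B)) => AB.
  have eAB : A = B by apply/eqP; rewrite eqEsubset AB BA.
  have AI : A \in hlift I by rewrite inE /nullity rank_indep eAB // subnn.
  by apply: (leq_trans _ (rank_ge _ _ _ AI (subxx A))); rewrite geq_minl.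
case/subsetPn: AB => a aA aB.
have Ha : a |: B \in hlift I.
  rewrite inE /nullity; have := rank_ge _ _ _ BI (subsetUr [set a] B).
  rewrite cardsU1 aB; lia.
apply: leq_trans (rank_ge _ _ _ Ha _); last by rewrite subUset sub1set aA BA.
by rewrite cardsU1 aB -HB geq_minr.
Qed.

End Gen.

Set Implicit Arguments.

Section FP.
Variables (S T : finType).
Implicit Types (A B : {set S + T}) (X : {set S}) (Y : {set T}).

Lemma card_split A : #|A| = #|inl @^-1: A| + #|inr @^-1: A|.
Proof.
rewrite -!sum1_card big_sumType; congr (_ + _); apply: eq_bigl => i; by rewrite !inE.
Qed.

Definition jn (X : {set S}) (Y : {set T}) : {set S + T} :=
  [set z | match z with inl a => a \in X | inr b => b \in Y end].

Lemma jnl X Y : inl @^-1: jn X Y = X.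
Proof. by apply/setP => a; rewrite !inE. Qed.
Lemma jnr X Y : inr @^-1: jn X Y = Y.
Proof. by apply/setP => a; rewrite !inE. Qed.
Lemma jn_sub X Y A : X \subset inl @^-1: A -> Y \subset inr @^-1: A -> jn X Y \subset A.
Proof.
move=> /subsetP HX /subsetP HY; apply/subsetP => [[a|b]]; rewrite inE => H.
  by have := HX _ H; rewrite inE.
by have := HY _ H; rewrite inE.
Qed.

Lemma fp_mem (I : {set {set S}}) (J : {set {set T}}) A :
  (A \in freeprod I J) = (inl @^-1: A \in I) &&
     (#|inl @^-1: A| + #|inr @^-1: A| <= mrank I setT + mrank J (inr @^-1: A)).
Proof.
rewrite inE /nullity /mlambda; case XI: (inl @^-1: A \in I) => //=.
rewrite (rank_indep _ _ _ XI).
have := rank_ge _ I setT _ XI (subsetT _); have := rank_le_card _ J (inr @^-1: A).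
move=> h1 h2; apply/idP/idP => h; lia.
Qed.

End FP.

Unset Implicit Arguments.

Section FP2.
Variables (S T : finType) (I : {set {set S}}) (J : {set {set T}}).
Implicit Types (A B : {set S + T}) (X : {set S}) (Y : {set T}).
Hypothesis I0 : set0 \in I.
Hypothesis Ih : forall A B : {set S}, B \in I -> A \subset B -> A \in I.
Hypothesis J0 : set0 \in J.
Hypothesis Jh : forall A B : {set T}, B \in J -> A \subset B -> A \in J.

Lemma fp0 : set0 \in freeprod I J.
Proof.
rewrite fp_mem.
have -> : inl @^-1: (set0 : {set S + T}) = set0 by apply/setP => x; rewrite !inE.
have -> : inr @^-1: (set0 : {set S + T}) = set0 by apply/setP => x; rewrite !inE.
by rewrite I0 !cards0.
Qed.

Lemma rank_fp : mrank (freeprod I J) setT = mrank I setT + mrank J setT.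
Proof.
apply/eqP; rewrite eqn_leq; apply/andP; split.
  apply/bigmax_leqP => B /andP[]; rewrite fp_mem => /andP[_ H] _.
  rewrite card_split; apply: leq_trans H _; rewrite leq_add2l.
  exact: rank_mono (subsetT _).
case: (rank_att _ _ I0 setT) => X /andP[XI _] HX.
case: (rank_att _ _ J0 setT) => Y /andP[YI _] HY.
have H : jn X Y \in freeprod I J.
  by rewrite fp_mem jnl jnr XI /= (rank_indep _ _ _ YI) HX.
apply: leq_trans (rank_ge _ _ _ _ H (subsetT _)).
by rewrite card_split jnl jnr HX HY.
Qed.

Lemma lift_mem A : (A \in hlift (freeprod I J)) =
  (nullity I (inl @^-1: A) <= 1) &&
  (#|inl @^-1: A| + #|inr @^-1: A| <= (mrank I setT).+1 + mrank J (inr @^-1: A)).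
Proof.
rewrite inE; apply/idP/idP.
  case/(nullity_le1 _ _ fp0) => B /andP[]; rewrite fp_mem => /andP[XI H] BA HAB.
  have sX : inl @^-1: B \subset inl @^-1: A := preimsetS inl BA.
  have sY : inr @^-1: B \subset inr @^-1: A := preimsetS inr BA.
  have cX : #|inl @^-1: B| <= #|inl @^-1: A| := subset_leq_card sX.
  have cY : #|inr @^-1: B| <= #|inr @^-1: A| := subset_leq_card sY.
  have mY : mrank J (inr @^-1: B) <= mrank J (inr @^-1: A) := rank_mono _ J _ _ sY.
  rewrite (card_split A) (card_split B) in HAB.
  apply/andP; split.
    apply/(nullity_le1 _ _ I0); exists (inl @^-1: B); [by rewrite XI sX | lia].
  by lia.
move=> /andP[nX HA].
apply/(nullity_le1 _ _ fp0).
set X := inl @^-1: A in nX HA *; set Y := inr @^-1: A in nX HA *.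
case XI: (X \in I); last first.
  case: (rank_att _ _ I0 X) => BX /andP[BXI BXs] HBX.
  have ne : mrank I X != #|X|.
    by apply/negP => /eqP /(rank_card_indep _ _ I0); rewrite XI.
  have := rank_le_card _ I X; rewrite /nullity in nX => lc.
  have HB : jn BX Y \in freeprod I J.
    rewrite fp_mem jnl jnr BXI /=.
    have ltX : mrank I X < #|X| by rewrite ltn_neqAle ne lc.
    lia.
  exists (jn BX Y); first by rewrite HB jn_sub.
  rewrite card_split (card_split (jn _ _)) jnl jnr -/X -/Y.
  have ltX : mrank I X < #|X| by rewrite ltn_neqAle ne lc.
  lia.
case: (leqP (#|X| + #|Y|) (mrank I setT + mrank J Y)) => HA2.
  by exists A; [rewrite fp_mem XI HA2 subxx | lia].
case: (rank_att _ _ J0 Y) => BY /andP[BYI BYs] HBY.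
case: (boolP (Y \subset BY)) => YB.
  have eY : Y = BY by apply/eqP; rewrite eqEsubset YB BYs.
  have := rank_ge _ I setT _ XI (subsetT _).
  move: HA2 HA; rewrite eY (rank_indep _ _ _ BYI); lia.
case/subsetPn: YB => y yY yB.
have sBY : BY \subset Y :\ y.
  apply/subsetP => z zB; rewrite in_setD1 (subsetP BYs _ zB) andbT.
  by apply/eqP => ezy; rewrite -ezy zB in yB.
have := rank_ge _ J _ _ BYI sBY.
have := rank_mono _ J _ _ (subsetDl Y [set y]).
have := cardsD1 y Y; rewrite yY add1n => cY r1 r2.
have HB : jn X (Y :\ y) \in freeprod I J.
  rewrite fp_mem jnl jnr XI /=; lia.
exists (jn X (Y :\ y)); first by rewrite HB jn_sub // subsetDl.
by rewrite card_split (card_split (jn _ _)) jnl jnr -/X -/Y; lia.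
Qed.

End FP2.


Theorem proposition5p4 (S T : finType) (I : {set {set S}}) (J : {set {set T}}) :
  is_matroid I -> is_matroid J ->
  trunc (freeprod I J) =
    (if 0 < mrank J setT then freeprod I (trunc J) else freeprod (trunc I) J)
  /\
  hlift (freeprod I J) =
    (if 0 < nullity I setT then freeprod (hlift I) J else freeprod I (hlift J)).
Proof.
case=> I0 Ih _ [J0 Jh _].
split; apply/setP => A.
  rewrite inE (rank_fp _ _ _ _ I0 J0) fp_mem (card_split A).
  set X := inl @^-1: A; set Y := inr @^-1: A.
  have rY := rank_le_card _ J Y.
  have mY := rank_mono _ J _ _ (subsetT Y).
  case: ifP => s0.
    rewrite fp_mem -/X -/Y (rank_trunc _ _ J0 Jh).
    case XI: (X \in I) => //=.
    have := rank_ge _ I setT _ XI (subsetT _).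
    move=> h; apply/idP/idP => [/andP[h1 h2]|h1]; [lia | apply/andP; split; lia].
  rewrite (fp_mem (trunc I) J A) -/X -/Y inE (rank_trunc _ _ I0 Ih).
  case XI: (X \in I) => //=.
  have := rank_ge _ I setT _ XI (subsetT _).
  move=> h; apply/idP/idP; lia.
rewrite lift_mem //.
set X := inl @^-1: A; set Y := inr @^-1: A.
have rY := rank_le_card _ J Y.
have rX := rank_le_card _ I X.
have mX := rank_mono _ I _ _ (subsetT X).
case: ifP => n0.
  rewrite fp_mem -/X -/Y inE (rank_hlift _ _ I0) cardsT.
  have := rank_le_card _ I setT; rewrite cardsT => h.
  rewrite /nullity cardsT in n0.
  case: (leqP (nullity I X) 1) => /= nX; last by [].
  rewrite /nullity in nX; have -> : minn #|S| (mrank I setT).+1 = (mrank I setT).+1 by apply/minn_idPr; lia.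
  done.
rewrite fp_mem -/X -/Y (rank_hlift _ _ J0).
have ST : setT \in I.
  apply: (rank_card_indep _ _ I0); have := rank_le_card _ I setT.
  rewrite /nullity in n0; lia.
have XI : X \in I by apply: Ih ST (subsetT X).
rewrite XI /nullity (rank_indep _ _ _ XI) subnn /=.
have := rank_ge _ I setT _ XI (subsetT _).
move=> h; apply/idP/idP; lia.
Qed.
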